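(* Let $n\ge2$ and $\pi\in\mathfrak S_{n-1}(2413,4213)$, and write $\mathrm{AVA}(\pi)=\{n=k_1>k_2>\dots>k_m=1\}$. Then for each $1\le j\le m$, $$\mathrm{AVA}(T_{k_j}(\pi))=\{n+1,\,k_j+1\}\cup\{k_j,k_{j+1},\dots,k_m\}.$$
   Context: $\mathfrak S_n(2413,4213)$ is the set of permutations of $[n]$ with no subsequence order isomorphic to $2413$ or $4213$. For $k\in[n]$ and $\pi=\pi_1\cdots\pi_{n-1}\in\mathfrak S_{n-1}$, define $T_k(\pi)=\pi'_1\pi'_2\cdots\pi'_{n-1}k\in\mathfrak S_n$, where $\pi'_i=\pi_i+1$ if $\pi_i\ge k$ and $\pi'_i=\pi_i$ otherwise. For $\pi\in\mathfrak S_{n-1}(2413,4213)$, $\mathrm{AVA}(\pi)=\{k\in[n]:T_k(\pi)\in\mathfrak S_n(2413,4213)\}$; it always contains $n$ and $1$. *)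

(* Defs.v *)
From mathcomp Require Import all_boot.
Set Implicit Arguments. Unset Strict Implicit. Unset Printing Implicit Defensive.

Definition is_perm (n : nat) (s : seq nat) : bool := perm_eq s (iota 1 n).

Definition order_iso (a b : seq nat) : Prop :=
  size a = size b /\
  forall i j, i < size a -> j < size a ->
    (nth 0 a i < nth 0 a j) = (nth 0 b i < nth 0 b j).

Definition contains (s p : seq nat) : Prop :=
  exists m : bitseq, size m = size s /\ order_iso (mask m s) p.

Definition avoids_2413_4213 (s : seq nat) : Prop :=
  ~ contains s [:: 2; 4; 1; 3] /\ ~ contains s [:: 4; 2; 1; 3].

Definition T (k : nat) (pi : seq nat) : seq nat :=
  rcons [seq (if k <= x then x.+1 else x) | x <- pi] k.

(* k \in AVA(pi), for pi in S_{n-1} with n - 1 = size pi: k in [n] and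
   T_k(pi) avoids 2413 and 4213. *)
Definition AVA (pi : seq nat) (k : nat) : Prop :=
  1 <= k <= (size pi).+1 /\ avoids_2413_4213 (T k pi).

(* Main.v *)
Require Import Defs.
From mathcomp Require Import all_boot.
From mathcomp Require Import zify.
Set Implicit Arguments. Unset Strict Implicit.

Definition sh (k v : nat) := if k <= v then v.+1 else v.

Lemma T_sh k s : T k s = rcons (map (sh k) s) k.
Proof. by []. Qed.

Lemma sh_lt k u v : (sh k u < sh k v) = (u < v).
Proof. rewrite /sh; case: ifP => H1; case: ifP => H2; apply/idP/idP; lia. Qed.

Lemma subseq_rcons_inv (t s : seq nat) y :
  subseq t (rcons s y) -> subseq t s \/ exists t', t = rcons t' y /\ subseq t' s.
Proof.
rewrite -subseq_rev rev_rcons.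
case/lastP: t => [|t u]; first by left; rewrite sub0seq.
rewrite rev_rcons /=.
case: eqP => [->|_] H; last by left; rewrite -subseq_rev rev_rcons.
right; exists t; split => //; by rewrite -subseq_rev.
Qed.

Lemma subseq_map_inv (f : nat -> nat) t s :
  subseq t (map f s) -> exists t0, subseq t0 s /\ t = map f t0.
Proof.
case/subseqP => m Hm ->; exists (mask m s); split; first exact: mask_subseq.
by rewrite map_mask.
Qed.

Lemma subseq_rcons2 (s1 s2 : seq nat) x : subseq s1 s2 -> subseq (rcons s1 x) (rcons s2 x).
Proof. by move=> H; rewrite -!cats1 cat_subseq ?subseq_refl. Qed.

Lemma subseq_into_rcons (s1 s2 : seq nat) x : subseq s1 s2 -> subseq s1 (rcons s2 x).
Proof. move=> H; apply: subseq_trans H _; exact: subseq_rcons. Qed.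

Lemma two_in (u v : nat) s : u \in s -> v \in s -> u != v ->
  subseq [:: u; v] s \/ subseq [:: v; u] s.
Proof.
elim: s => [|w s IH] //= Hu Hv Huv.
rewrite !inE in Hu Hv.
case: (eqVneq u w) => [E|Nu].
  subst w; left => /=; rewrite ?eqxx sub1seq.
  by move: Hv; case: eqP => [E|_] //=; rewrite E eqxx in Huv.
case: (eqVneq v w) => [E|Nv].
  subst w; right => /=; rewrite ?eqxx sub1seq.
  by move: Hu; case: eqP => [E|_] //=; rewrite E eqxx in Nu.
move: Hu Hv; rewrite (negbTE Nu) (negbTE Nv) /= => Hu Hv.
by case: (IH Hu Hv Huv) => H; [left|right].
Qed.

Definition pat (a b c d : nat) := ((c < a < d) && (d < b)) || ((c < b < d) && (d < a)).

Lemma oiso1 a b c d : order_iso [:: a; b; c; d] [:: 2; 4; 1; 3] <-> (c < a < d) && (d < b).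
Proof.
split.
  case=> _ H; have h1 := H 2 0; have h2 := H 0 3; have h3 := H 3 1.
  simpl in h1, h2, h3. rewrite h1 ?h2 ?h3 //.
move=> H; split => // i j Hi Hj.
case: i Hi => [|[|[|[|i]]]] Hi; case: j Hj => [|[|[|[|j]]]] Hj //=;
  first [ lia | (apply/negbTE; rewrite -leqNgt; lia) | reflexivity ].
Qed.

Lemma oiso2 a b c d : order_iso [:: a; b; c; d] [:: 4; 2; 1; 3] <-> (c < b < d) && (d < a).
Proof.
split.
  case=> _ H; have h1 := H 2 1; have h2 := H 1 3; have h3 := H 3 0.
  simpl in h1, h2, h3. rewrite h1 ?h2 ?h3 //.
move=> H; split => // i j Hi Hj.
case: i Hi => [|[|[|[|i]]]] Hi; case: j Hj => [|[|[|[|j]]]] Hj //=;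
  first [ lia | (apply/negbTE; rewrite -leqNgt; lia) | reflexivity ].
Qed.

Lemma contains4 s p : size p = 4 -> contains s p <->
  exists a b c d, subseq [:: a; b; c; d] s /\ order_iso [:: a; b; c; d] p.
Proof.
move=> Hp; split.
  case=> m [Hm Ho]; move: Ho.
  case E: (mask m s) => [|a [|b [|c [|d [|e t]]]]] Ho; try by case: Ho; rewrite Hp.
  exists a, b, c, d; split; [rewrite -E; exact: (mask_subseq m s) | done].
case=> a [b [c [d [Hs Ho]]]]; case/subseqP: Hs => m Hm E; exists m; by rewrite -E.
Qed.

Lemma avoidsP s : avoids_2413_4213 s <->
  ~ (exists a b c d, subseq [:: a; b; c; d] s /\ pat a b c d).
Proof.
split.
- case=> H1 H2 [a [b [c [d [Hs Hp]]]]]; case/orP: Hp => Hp; [apply: H1 | apply: H2];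
    apply/contains4 => //; exists a, b, c, d; split => //; [apply/oiso1 | apply/oiso2] => //.
- move=> H; split => /contains4 - /(_ erefl) [a [b [c [d [Hs Ho]]]]]; apply: H;
    exists a, b, c, d; split => //; rewrite /pat.
    by move/oiso1: Ho => ->.
  by move/oiso2: Ho => ->; rewrite orbT.
Qed.

Definition Bad (s : seq nat) (y : nat) := exists a b c, subseq [:: a; b; c] s /\
  c < a /\ c < b /\ ((a < y <= b) \/ (b < y <= a)).

Lemma avoids_T x s : avoids_2413_4213 (T x s) <-> avoids_2413_4213 s /\ ~ Bad s x.
Proof.
rewrite T_sh !avoidsP; split.
- move=> H; split.
  + move=> [a [b [c [d [Hs Hp]]]]]; apply: H.
    exists (sh x a), (sh x b), (sh x c), (sh x d); split.
      apply: subseq_into_rcons; exact: (map_subseq (sh x) Hs).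
    by rewrite /pat !sh_lt.
  + move=> [a [b [c [Hs [H1 [H2 H3]]]]]]; apply: H.
    exists (sh x a), (sh x b), (sh x c), x; split.
      by have /= := subseq_rcons2 x (map_subseq (sh x) Hs).
    rewrite /pat /sh; move: H3; case: ifP; case: ifP; case: ifP; lia.
- move=> [H1 H2] [a [b [c [d [Hs Hp]]]]].
  case: (subseq_rcons_inv Hs) => [Hs'|[t' [Et Hs']]].
  + case: (subseq_map_inv Hs') => t0 [Ht0 E]; move: E Ht0.
    case: t0 => [|a0 [|b0 [|c0 [|d0 [|e0 t0]]]]] //= [Ea Eb Ec Ed] Ht0; subst.
    apply: H1; exists a0, b0, c0, d0; split => //; by move: Hp; rewrite /pat !sh_lt.
  + have Hsz : size t' = 3 by move/(congr1 size): Et; rewrite size_rcons => -[].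
    move: Et Hs'; case: t' Hsz => [|a' [|b' [|c' [|e' t']]]] //= _ [Ea Eb Ec Ed] Hs'; subst.
    case: (subseq_map_inv Hs') => t0 [Ht0 E]; move: E Ht0.
    case: t0 => [|a0 [|b0 [|c0 [|d0 t0]]]] //= [Ea Eb Ec] Ht0; subst.
    apply: H2; exists a0, b0, c0; split => //; move: Hp; rewrite /pat /sh.
    case: ifP; case: ifP; case: ifP; lia.
Qed.

Lemma Bad_dec k s y : Bad (rcons (map (sh k) s) k) y ->
  (exists a0 b0 c0, subseq [:: a0; b0; c0] s /\ c0 < a0 /\ c0 < b0 /\
     ((sh k a0 < y <= sh k b0) \/ (sh k b0 < y <= sh k a0))) \/
  (exists a b, k < a /\ k < b /\ ((a < y <= b) \/ (b < y <= a))).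
Proof.
move=> [a [b [c [Hs [H1 [H2 H3]]]]]].
case: (subseq_rcons_inv Hs) => [Hs'|[t' [Et _]]].
- left; case: (subseq_map_inv Hs') => t0 [Ht0 E]; move: E Ht0.
  case: t0 => [|a0 [|b0 [|c0 [|d0 t0]]]] //= [Ea Eb Ec] Ht0; subst.
  exists a0, b0, c0; move: H1 H2; rewrite !sh_lt => H1 H2; by [].
- right; have Hsz : size t' = 2 by move/(congr1 size): Et; rewrite size_rcons => -[].
  move: Et; case: t' Hsz => [|a' [|b' [|e' t']]] //= _ [Ea Eb Ec]; subst.
  by exists a', b'.
Qed.

Lemma Bad_A k s y : Bad (rcons (map (sh k) s) k) y -> y <= k -> Bad s y.
Proof.
case/Bad_dec => [[a0 [b0 [c0 [Hs [H1 [H2 H3]]]]]]|[a [b [H1 [H2 H3]]]]] Hy; last lia.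
exists a0, b0, c0; do 3! split => //; move: H3; rewrite /sh; case: ifP; case: ifP; lia.
Qed.

Lemma Bad_C k s : Bad (rcons (map (sh k) s) k) k.+1 -> Bad s k.
Proof.
case/Bad_dec => [[a0 [b0 [c0 [Hs [H1 [H2 H3]]]]]]|[a [b [H1 [H2 H3]]]]]; last lia.
exists a0, b0, c0; do 3! split => //; move: H3; rewrite /sh; case: ifP; case: ifP; lia.
Qed.

Lemma Bad_B k s y : Bad s y -> y <= k -> Bad (rcons (map (sh k) s) k) y.
Proof.
move=> [a [b [c [Hs [H1 [H2 H3]]]]]] Hy; exists (sh k a), (sh k b), (sh k c); split.
  apply: subseq_into_rcons; exact: (map_subseq (sh k) Hs).
rewrite !sh_lt; do 2! split => //; rewrite /sh; case: ifP; case: ifP; lia.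
Qed.

Lemma Bad_D k s y : k \in s -> y.-1 \in s -> k.+2 <= y -> Bad (rcons (map (sh k) s) k) y.
Proof.
move=> Hk Hy Hky.
have Hne : k != y.-1 by apply/eqP; lia.
have E1 : sh k k = k.+1 by rewrite /sh leqnn.
have E2 : sh k y.-1 = y by rewrite /sh; case: ifP; lia.
case: (two_in Hk Hy Hne) => Hs.
- exists k.+1, y, k; split; last lia.
  by have /= := subseq_rcons2 k (map_subseq (sh k) Hs); rewrite E1 E2.
- exists y, k.+1, k; split; last lia.
  by have /= := subseq_rcons2 k (map_subseq (sh k) Hs); rewrite E1 E2.
Qed.

Lemma Bad_E t y : Bad t y -> exists v, v \in t /\ y <= v.
Proof.
move=> [a [b [c [Hs [_ [_ H3]]]]]].
have Ha : a \in t by apply: (mem_subseq Hs); rewrite inE eqxx.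
have Hb : b \in t by apply: (mem_subseq Hs); rewrite !inE eqxx orbT.
case: H3 => H3; [exists b | exists a]; split => //; lia.
Qed.

Theorem lemma5p3 (n : nat) (pi : seq nat) (ks : seq nat) :
  2 <= n ->
  is_perm n.-1 pi ->
  avoids_2413_4213 pi ->
  sorted gtn ks ->
  (forall k, AVA pi k <-> k \in ks) ->
  forall j, j < size ks ->
    forall x, AVA (T (nth 0 ks j) pi) x <->
      (x = n.+1 \/ x = (nth 0 ks j).+1 \/ x \in drop j ks).
Proof.
move=> Hn Hpi Hav Hsort Hks j Hj x.
set k := nth 0 ks j.
have Hk : k \in ks by apply: mem_nth.
have [Hk1 HkT] := proj2 (Hks k) Hk.
have Hsz : size pi = n.-1 by rewrite (perm_size Hpi) size_iota.
have Hmem : forall v, v \in pi -> 1 <= v <= n.-1.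
  by move=> v; rewrite (perm_mem Hpi) mem_iota; lia.
have HkB : ~ Bad pi k by case/avoids_T: HkT.
have HAVA : forall y, AVA pi y <-> (1 <= y <= n) /\ ~ Bad pi y.
  move=> y; rewrite /AVA avoids_T Hsz; split.
    by case=> H [_ H']; split => //; lia.
  by case=> H H'; split => //; lia.
have Htr : transitive gtn by move=> a b c /= H1 H2; lia.
have Hdrop : forall y, y \in drop j ks <-> y \in ks /\ y <= k.
  move=> y; split.
    move=> Hy; split; first exact: mem_drop Hy.
    have Hi : index y (drop j ks) < size (drop j ks) by rewrite index_mem.
    rewrite -(nth_index 0 Hy) nth_drop /k.
    move: Hi; rewrite size_drop; set i := index y (drop j ks) => Hi.
    case: (posnP i) => [->|Hi0]; first by rewrite addn0.
    have := sorted_ltn_nth Htr 0 Hsort; move=> /(_ j (j + i)).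
    rewrite !inE => H; apply: ltnW; apply: H => //; lia.
  case=> Hy Hyk.
  have Hi : index y ks < size ks by rewrite index_mem.
  have Hny := nth_index 0 Hy.
  case: (ltnP (index y ks) j) => Hij.
    have := sorted_ltn_nth Htr 0 Hsort; move=> /(_ (index y ks) j).
    rewrite !inE Hny => H; have := H Hi Hj Hij; rewrite /= -/k; lia.
  rewrite -Hny; apply/(nthP 0); exists (index y ks - j).
    rewrite size_drop; exact: ltn_sub2r Hj Hi.
  by rewrite nth_drop subnKC.
have HszT : size (T k pi) = n by rewrite T_sh size_rcons size_map Hsz; lia.
rewrite /AVA avoids_T HszT; split.
- case=> Hx [_ HB].
  have [Hxk|Hxk] := leqP x k.
    right; right; apply/Hdrop; split => //; apply/Hks/HAVA; split; first lia.
    move=> B; apply: HB; rewrite T_sh; exact: Bad_B.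
  case: (eqVneq x k.+1) => [->|Hne]; first by right; left.
  case: (eqVneq x n.+1) => [->|Hne2]; first by left.
  exfalso; apply: HB; rewrite T_sh; apply: Bad_D; last lia.
    rewrite (perm_mem Hpi) mem_iota; lia.
  rewrite (perm_mem Hpi) mem_iota; lia.
- case=> [->|[->|/Hdrop [Hx1 Hx2]]].
  + split; first lia. split => //.
    move=> /Bad_E [v [Hv Hle]].
    rewrite T_sh mem_rcons inE in Hv; case/orP: Hv => [/eqP Ev|/mapP [u Hu Ev]].
      rewrite Hsz in Hk1; lia.
    have := Hmem u Hu; move: Ev; rewrite /sh; case: ifP; lia.
  + split; first (rewrite Hsz in Hk1; lia). split => //.
    rewrite T_sh => /Bad_C; exact: HkB.
  + have [Hx1' HxB] := proj1 (HAVA x) (proj2 (Hks x) Hx1).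
    split; first lia. split => //.
    rewrite T_sh => /Bad_A /(_ Hx2); exact: HxB.
Qed.
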